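(* Let $d\ge1$, $m\in\mathbb{N}$ ($m\ge1$), and let $A_0,A_1\in\mathbb{R}^{d\times d}$ be constant matrices with $A_0A_1\ne A_1A_0$. Let $Z:\mathbb{Z}\to\mathbb{R}^{d\times d}$ be the discrete function defined in the context. Then $Z$ is the unique solution of the initial value problem \[ \Delta X(u)=A_0X(u-m)+X(u-m)A_1,\ \ u\in\mathbb{Z}_0^{\infty},\qquad X(u)=I,\ \ u\in\mathbb{Z}_{-m}^{0}. \] In particular, \[ \Delta Z(u)=A_0Z(u-m)+Z(u-m)A_1\qquad\text{for all }u\in\mathbb{Z}_{-m}^{\infty}. \]
   Context: $\Theta$ and $I$ denote the $d\times d$ zero and identity matrices; $\mathbb{Z}_a^b=\{a,a+1,\dots,b\}$ (with $\mathbb{Z}_a^\infty=\{a,a+1,\dots\}$ and $\mathbb{Z}_{-\infty}^b=\{\dots,b-1,b\}$); $\Delta X(u)=X(u+1)-X(u)$. For integers $a$ and $r\ge0$, $\binom{a}{r}=a(a-1)\cdots(a-r+1)/r!$. Define matrices $Q_{r+1}(rm)$, $r=0,1,2,\dots$, by $Q_1(0)=I$ and $Q_{r+1}(rm)=A_0Q_r((r-1)m)+Q_r((r-1)m)A_1$ for $r\ge1$. Define $Z(u)=\Theta$ for $u\in\mathbb{Z}_{-\infty}^{-m-1}$, $Z(u)=I$ for $u\in\mathbb{Z}_{-m}^{0}$, and for each integer $n\ge1$ and $u\in\mathbb{Z}_{(n-1)(m+1)+1}^{n(m+1)}$, \[ Z(u)=\sum_{r=0}^{n}\binom{u-(r-1)m}{r}Q_{r+1}(rm).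 \] *)

(* Defs.v *)
From HB Require Import structures.
From mathcomp Require Import all_boot all_order all_algebra.
From mathcomp Require Import reals.
Set Implicit Arguments. Unset Strict Implicit. Unset Printing Implicit Defensive.
Import Order.TTheory GRing.Theory Num.Theory.
Local Open Scope ring_scope.

Definition binomZ (R : realType) (a : int) (r : nat) : R :=
  (\prod_(i < r) ((a - i%:Z)%:~R : R)) / (r`!)%:R.

(* Qm A0 A1 r = Q_{r+1}(r m):  Q_1(0) = I, Q_{r+1}(rm) = A0 Q_r((r-1)m) + Q_r((r-1)m) A1 *)
Fixpoint Qm (R : realType) (d : nat) (A0 A1 : 'M[R]_d) (r : nat) : 'M[R]_d :=
  match r with
  | 0 => 1%:M
  | r'.+1 => A0 *m Qm A0 A1 r' + Qm A0 A1 r' *m A1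
  end.

(* The function Z of the paper.  For u >= 1 the block index n with
   (n-1)(m+1)+1 <= u <= n(m+1) is n = ((u-1) %/ (m+1)) + 1. *)
Definition Zfun (R : realType) (d m : nat) (A0 A1 : 'M[R]_d) (u : int) : 'M[R]_d :=
  if u < - (m%:Z) then 0
  else if u <= 0 then 1%:M
  else let n := ((`|u|%N).-1 %/ m.+1).+1 in
       \sum_(r < n.+1) binomZ R (u - (r%:Z - 1) * m%:Z) r *: Qm A0 A1 r.

Definition delay_eq (R : realType) (d m : nat) (A0 A1 : 'M[R]_d)
  (X : int -> 'M[R]_d) (u : int) : Prop :=
  X (u + 1) - X u = A0 *m X (u - m%:Z) + X (u - m%:Z) *m A1.

Definition solves_ivp (R : realType) (d m : nat) (A0 A1 : 'M[R]_d)
  (X : int -> 'M[R]_d) : Prop :=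
  (forall u : int, 0 <= u -> delay_eq m A0 A1 X u) /\
  (forall u : int, - (m%:Z) <= u <= 0 -> X u = 1%:M).

(* Main.v *)
Require Import Defs.
From HB Require Import structures.
From mathcomp Require Import all_boot all_order all_algebra.
From mathcomp Require Import reals.
From mathcomp Require Import zify ring lra.
Import Order.TTheory GRing.Theory Num.Theory.
Local Open Scope ring_scope.

Section S.
Variable R : realType.

Lemma binomZ0 (a : int) : binomZ R a 0 = 1.
Proof. by rewrite /binomZ big_ord0 fact0 divr1. Qed.

Lemma prod_shift (a : int) r :
  \prod_(i < r.+1) ((a + 1 - i%:Z)%:~R : R) = (a + 1)%:~R * \prod_(i < r) ((a - i%:Z)%:~R).
Proof.
rewrite big_ord_recl /= subr0; congr (_ * _); apply: eq_bigr => i _.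
congr (_%:~R); rewrite /bump /=; lia.
Qed.

Lemma binomZ_pascal (a : int) r : binomZ R (a + 1) r.+1 - binomZ R a r.+1 = binomZ R a r.
Proof.
rewrite /binomZ prod_shift big_ord_recr /= factS natrM.
set P := \prod_(i < r) _.
have h1 : (r`!)%:R != 0 :> R by rewrite pnatr_eq0 -lt0n fact_gt0.
have h2 : (r.+1)%:R != 0 :> R by rewrite pnatr_eq0.
rewrite intrD intrB /=.
field.
rewrite -natr1 addrC in h2; by apply/andP; split.
Qed.

Lemma prod_diag k : \prod_(i < k) (((k%:Z) - i%:Z)%:~R : R) = (k`!)%:R.
Proof.
elim: k => [|k IH]; first by rewrite big_ord0.
have -> : (k.+1)%:Z = k%:Z + 1 by lia.
rewrite prod_shift IH factS natrM; congr (_ * _).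
by rewrite -PoszD addn1.
Qed.

Lemma binomZ_diag k : binomZ R k%:Z k = 1.
Proof.
rewrite /binomZ prod_diag divff // pnatr_eq0 -lt0n fact_gt0 //.
Qed.

Lemma binomZ_zero k : binomZ R k%:Z k.+1 = 0.
Proof. by rewrite /binomZ big_ord_recr /= subrr mulr0 mul0r. Qed.

Variables (d m : nat) (A0 A1 : 'M[R]_d).

Definition S k (u : int) : 'M[R]_d :=
  \sum_(r < k.+1) binomZ R (u - (r%:Z - 1) * m%:Z) r *: Qm A0 A1 r.

Lemma S0 u : S 0 u = 1%:M.
Proof. by rewrite /S big_ord1 binomZ0 scale1r. Qed.

Lemma S_key k u : S k.+1 (u + 1) - S k.+1 u = A0 *m S k (u - m%:Z) + S k (u - m%:Z) *m A1.
Proof.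
rewrite /S -sumrB big_ord_recl /= !binomZ0 subrr add0r.
rewrite mulmx_sumr mulmx_suml -big_split /=.
apply: eq_bigr => i _.
rewrite -scalerBl -scalemxAr -scalemxAl -scalerDr /=.
congr (_ *: _).
have -> : u + 1 - ((bump 0 i)%:Z - 1) * m%:Z = (u - i%:Z * m%:Z) + 1.
  rewrite /bump /= add1n -addn1 PoszD; ring.
have -> : (bump 0 i)%:Z - 1 = i%:Z by rewrite /bump /= add1n -addn1 PoszD; ring.
rewrite [bump 0 i]/bump /= add1n binomZ_pascal; congr binomZ.
ring.
Qed.

Lemma Z_init u : - (m%:Z) <= u <= 0 -> Zfun m A0 A1 u = 1%:M.
Proof. move=> /andP[h1 h2]; rewrite /Zfun ifF ?h2 //; lia. Qed.

Lemma Z_pos n : Zfun m A0 A1 (n.+1)%:Z = S (n %/ m.+1).+1 n.+1.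
Proof. by rewrite /Zfun ifF ?ifF //; lia. Qed.

Lemma divHelp q r : (r < m.+1)%N -> ((q * m.+1 + r) %/ m.+1 = q)%N.
Proof. by move=> h; rewrite divnMDl // divn_small // addn0. Qed.

Lemma S_succ k u : S k.+1 u = S k u + binomZ R (u - k%:Z * m%:Z) k.+1 *: Qm A0 A1 k.+1.
Proof.
rewrite /S big_ord_recr /=; congr (_ + binomZ R _ _ *: _).
rewrite -addn1 PoszD; ring.
Qed.

Lemma delay_nat n : delay_eq m A0 A1 (Zfun m A0 A1) n%:Z.
Proof.
rewrite (div.divn_eq n m.+1).
have := div.ltn_pmod n (ltn0Sn m).
move: (n %/ m.+1)%N (n %% m.+1)%N => q r hr.
have E1 : Zfun m A0 A1 ((q * m.+1 + r)%N%:Z + 1) = S q.+1 ((q * m.+1 + r)%N%:Z + 1).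
  have -> : (q * m.+1 + r)%N%:Z + 1 = (q * m.+1 + r).+1%:Z by lia.
  by rewrite Z_pos divHelp.
have E2 : Zfun m A0 A1 ((q * m.+1 + r)%N%:Z) = S q.+1 ((q * m.+1 + r)%N%:Z).
  case: r hr E1 => [|r] hr _.
    rewrite S_succ.
    have -> : (q * m.+1 + 0)%N%:Z - q%:Z * m%:Z = q%:Z by lia.
    rewrite binomZ_zero scale0r addr0.
    case: q => [|q]; first by rewrite S0 Z_init //; lia.
    have -> : (q.+1 * m.+1 + 0)%N = (q * m.+1 + m).+1 by lia.
    by rewrite Z_pos divHelp.
  have -> : (q * m.+1 + r.+1)%N = (q * m.+1 + r).+1 by lia.
  by rewrite Z_pos divHelp // ltnW.
have E3 : Zfun m A0 A1 ((q * m.+1 + r)%N%:Z - m%:Z) = S q ((q * m.+1 + r)%N%:Z - m%:Z).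
  case: q E1 E2 => [|q] _ _.
    by rewrite S0 Z_init //; lia.
  have -> : (q.+1 * m.+1 + r)%N%:Z - m%:Z = (q * m.+1 + r).+1%:Z by lia.
  by rewrite Z_pos divHelp.
rewrite /delay_eq E1 E2 E3; exact: S_key.
Qed.


Lemma Z_neg u : u < - (m%:Z) -> Zfun m A0 A1 u = 0.
Proof. by move=> h; rewrite /Zfun h. Qed.

Lemma delay_all u : - (m%:Z) <= u -> delay_eq m A0 A1 (Zfun m A0 A1) u.
Proof.
move=> hu; case: (lerP 0 u) => h0.
  by case: u hu h0 => [n|n] // _ _; apply: delay_nat.
rewrite /delay_eq (Z_neg (u - m%:Z)); last by lia.
rewrite mulmx0 mul0mx addr0 !Z_init ?subrr //; lia.
Qed.

Lemma uniq_sol X : solves_ivp m A0 A1 X ->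
  forall u : int, - (m%:Z) <= u -> X u = Zfun m A0 A1 u.
Proof.
move=> [hX hI].
suff H : forall n : nat, forall u : int, - (m%:Z) <= u <= n%:Z -> X u = Zfun m A0 A1 u.
  move=> u hu; case: (lerP u 0) => h.
    by apply: (H 0%N); lia.
  case: u hu h => [n|n] // _ _; by apply: (H n); lia.
elim=> [|n IH] u hu.
  by rewrite hI ?Z_init.
case: (lerP u n%:Z) => h; first by apply: IH; lia.
have -> : u = n%:Z + 1 by lia.
have e1 := hX n%:Z isT.
have e2 := delay_nat n.
rewrite /delay_eq in e1 e2.
have -> : X (n%:Z + 1) = X n%:Z + (A0 *m X (n%:Z - m%:Z) + X (n%:Z - m%:Z) *m A1).
  by rewrite -e1 [X n%:Z + _]addrC subrK.
have -> : Zfun m A0 A1 (n%:Z + 1) = Zfun m A0 A1 n%:Z +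
   (A0 *m Zfun m A0 A1 (n%:Z - m%:Z) + Zfun m A0 A1 (n%:Z - m%:Z) *m A1).
  by rewrite -e2 [Zfun m A0 A1 n%:Z + _]addrC subrK.
rewrite IH ?(IH (n%:Z - m%:Z)) //; lia.
Qed.

End S.

Theorem theorem3 (R : realType) (d m : nat) (A0 A1 : 'M[R]_d)
  (hd : (0 < d)%N) (hm : (0 < m)%N) (hA : A0 *m A1 != A1 *m A0) :
  solves_ivp m A0 A1 (Zfun m A0 A1) /\
  (forall X : int -> 'M[R]_d, solves_ivp m A0 A1 X ->
     forall u : int, - (m%:Z) <= u -> X u = Zfun m A0 A1 u) /\
  (forall u : int, - (m%:Z) <= u -> delay_eq m A0 A1 (Zfun m A0 A1) u).
Proof.
split; last split.
- split; first by move=> u hu; apply: delay_all; lia.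
  exact: Z_init.
- exact: uniq_sol.
- exact: delay_all.
Qed.
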